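(* Let $G$ be a topological group. Let $f\in L^0(G)$ and let $U$ be a neighbourhood of the identity in $L^0(G)$. Then there exist a finite subset $E\subseteq G$ and $m\in\mathbb N$ such that for every $n\in\mathbb N$ with $n\ge m$ one has $f\in U\,h_n(E^n)$.
   Context: Let $\lambda$ be Lebesgue measure on $[0,1]$. A map $f\colon [0,1]\to G$ is strongly $\lambda$-measurable if for every $\epsilon>0$ there is a closed $A\subseteq[0,1]$ with $\lambda([0,1]\setminus A)\le\epsilon$ and $f|_A$ continuous. $L^{0}(G)$ is the set of $\lambda$-a.e. equivalence classes of strongly $\lambda$-measurable maps $[0,1]\to G$, with pointwise group operations and the topology of convergence in measure: a neighbourhood basis of the identity consists of the sets $N(U,\epsilon)=\{f : \lambda(\{x: f(x)\notin U\})<\epsilon\}$, $U$ an open identity neighbourhood in $G$, $\epsilon>0$. For $n\ge1$, $h_n\colon G^n\to L^0(G)$ sends $g=(g_1,\dots,g_n)$ to the map which is constantly $g_i$ on $[(i-1)/n,i/n)$ for $i=1,\dots,n$. *)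

(* Defs.v *)
From HB Require Import structures.
From mathcomp Require Import all_boot all_order all_algebra.
From mathcomp Require Import all_classical all_reals all_analysis.
Set Implicit Arguments. Unset Strict Implicit. Unset Printing Implicit Defensive.
Import Order.TTheory GRing.Theory Num.Theory numFieldNormedType.Exports.
Local Open Scope classical_set_scope.
Local Open Scope ring_scope.
Local Open Scope ereal_scope.

Definition topological_group (G : topologicalType)
    (mul : G -> G -> G) (inv : G -> G) (one : G) : Prop :=
  [/\ (forall x y z, mul x (mul y z) = mul (mul x y) z),
      (forall x, mul one x = x /\ mul x one = x),
      (forall x, mul (inv x) x = one /\ mul x (inv x) = one),
      continuous (fun p : G * G => mul p.1 p.2)
    & continuous inv].

(* Lebesgue measure on [0,1]: maps [0,1] -> G are represented by maps R -> G
   whose values outside [0,1] are irrelevant. *)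

Definition strongly_measurable (R : realType) (G : topologicalType)
    (f : R -> G) : Prop :=
  forall eps : R, (0 < eps)%R ->
    exists A : set R, [/\ closed A, A `<=` `[0%R, 1%R]%classic,
      lebesgue_measure (`[0%R, 1%R]%classic `\` A) <= eps%:E
      & {within A, continuous f}].

Definition ae_eq01 (R : realType) (G : topologicalType) (f g : R -> G) : Prop :=
  (@lebesgue_measure R).-negligible ([set x | f x <> g x] `&` `[0%R, 1%R]%classic).

Definition N0 (R : realType) (G : topologicalType) (V : set G) (eps : R) :
    set (R -> G) :=
  [set f | strongly_measurable f /\
     lebesgue_measure (`[0%R, 1%R]%classic `&` [set x | ~ V (f x)]) < eps%:E].

(* A set of representatives describing a subset of L^0(G): it consists of
   strongly measurable maps and is closed under a.e. equality. *)
Definition L0_set (R : realType) (G : topologicalType) (U : set (R -> G)) : Prop :=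
  (forall u, U u -> strongly_measurable u) /\
  (forall u v, U u -> strongly_measurable v -> ae_eq01 u v -> U v).

Definition L0_nbhs1 (R : realType) (G : topologicalType) (one : G)
    (U : set (R -> G)) : Prop :=
  L0_set U /\
  exists (V : set G) (eps : R), [/\ open V, V one, (0 < eps)%R & N0 V eps `<=` U].

(* h_n : G^n -> L^0(G): constantly g_i on [(i-1)/n, i/n) (1-indexed);
   here 0-indexed: the k-th entry (k < n) on [k/n, (k+1)/n).
   The value at x = 1 (a null set) is taken to be the last entry. *)
Definition hn (R : realType) (G : topologicalType) (one : G) (n : nat)
    (g : n.-tuple G) (x : R) : G :=
  nth one g (minn (Num.truncn (n%:R * x)%R) n.-1).

(* Main.v *)
Require Import Defs.
From HB Require Import structures.
From mathcomp Require Import all_boot all_order all_algebra.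
From mathcomp Require Import all_classical all_reals all_analysis.
From mathcomp Require Import lra ring zify finmap measurable_realfun.
Import Order.TTheory GRing.Theory Num.Theory numFieldNormedType.Exports.
Local Open Scope classical_set_scope.
Local Open Scope ring_scope.
Set Implicit Arguments. Unset Strict Implicit.
Section H.
Variable R : realType.

Lemma lm_le (A B : set R) : A `<=` B -> (lebesgue_measure A <= lebesgue_measure B)%E.
Proof. move=> AB. exact: le_mu_ext. Qed.

Lemma idx_bounds (n : nat) (x : R) : (0 < n)%N -> 0 <= x <= 1 ->
  (minn (Num.truncn (n%:R * x)) n.-1)%:R <= n%:R * x <= (minn (Num.truncn (n%:R * x)) n.-1).+1%:R.
Proof.
move=> n0 /andP[x0 x1].
have nx0 : 0 <= n%:R * x by rewrite mulr_ge0.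
have nxn : n%:R * x <= n%:R by rewrite ler_piMr.
have /andP[t1 t2] := truncn_itv nx0.
case: (leqP (Num.truncn (n%:R * x)) n.-1) => h.
  by rewrite t1 ltW.
rewrite prednK //.
apply/andP; split; last by [].
apply: le_trans _ t1; rewrite ler_nat; exact: ltnW.
Qed.

Lemma idx_close (n : nat) (x y : R) : (0 < n)%N -> 0 <= x <= 1 -> 0 <= y <= 1 ->
  minn (Num.truncn (n%:R * x)) n.-1 = minn (Num.truncn (n%:R * y)) n.-1 ->
  `|n%:R * x - n%:R * y| <= 1.
Proof.
move=> n0 hx hy e.
have /andP[a1 a2] := idx_bounds n0 hx.
have /andP[b1 b2] := idx_bounds n0 hy.
rewrite e in a1 a2.
set k := minn _ _ in a1 a2 b1 b2.
rewrite -natr1 in a2 b2.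
rewrite ler_norml; apply/andP; split; lra.
Qed.

Lemma idx_const (n : nat) (x y eta : R) : (0 < n)%N -> 0 <= x <= 1 -> 0 <= y <= 1 ->
  (forall k : nat, (0 < k < n)%N -> eta <= `|n%:R * x - k%:R|) ->
  `|n%:R * x - n%:R * y| < eta ->
  minn (Num.truncn (n%:R * x)) n.-1 = minn (Num.truncn (n%:R * y)) n.-1.
Proof.
move=> n0 /andP[x0 x1] /andP[y0 y1] H hxy.
have nx0 : 0 <= n%:R * x by rewrite mulr_ge0.
have ny0 : 0 <= n%:R * y by rewrite mulr_ge0.
have /andP[a1 a2] := truncn_itv nx0.
have /andP[b1 b2] := truncn_itv ny0.
set a := Num.truncn _ in a1 a2 *.
set b := Num.truncn _ in b1 b2 *.
have key : forall c d : nat, (c < d)%N -> (d%:R <= n%:R * y /\ n%:R * x < c.+1%:R \/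
     d%:R <= n%:R * x /\ n%:R * y < c.+1%:R) -> (c.+1 < n)%N -> False.
  move=> c d cd hh cn.
  have := H c.+1; rewrite cn /= => /(_ isT) hk.
  have cdR : c.+1%:R <= d%:R :> R by rewrite ler_nat.
  move: hxy hk; rewrite ltr_norml ler_normr => /andP[? ?] /orP[] ?;
    case: hh => -[? ?]; lra.
have nyn : (b <= n)%N.
  rewrite -(ler_nat R); apply: le_trans b1 _; rewrite ler_piMr //.
have nxn : (a <= n)%N.
  rewrite -(ler_nat R); apply: le_trans a1 _; rewrite ler_piMr //.
case: (ltngtP a b) => [ab|ba|-> //].
- case: (ltnP a.+1 n) => an.
    by exfalso; apply: (key a b ab) => //; left.
  lia.
- case: (ltnP b.+1 n) => bn.
    by exfalso; apply: (key b a ba) => //; right.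
  lia.
Qed.
End H.
Lemma mulc_cvg (G : topologicalType) (mul : G -> G -> G) (inv : G -> G) (one : G)
  (HG : topological_group mul inv one) (T : Type) (F : set_system T) {FF : Filter F}
  (h : T -> G) (a c : G) : h @ F --> a -> (fun t => mul (h t) c) @ F --> mul a c.
Proof.
case: HG => _ _ _ cm _ ha.
have hp : (fun t => (h t, c)) @ F --> (a, c) by apply: cvg_pair => //; exact: cvg_cst.
exact: (cvg_comp _ _ hp (cm (a, c))).
Qed.

Lemma local_V (R : realType) (G : topologicalType) (mul : G -> G -> G) (inv : G -> G) (one : G)
  (HG : topological_group mul inv one) (A : set R) (f : R -> G) (V : set G) :
  {within A, continuous f} -> open V -> V one -> forall x, A x ->
  exists2 r : R, 0 < r & forall y, A y -> `|x - y| < r -> V (mul (f y) (inv (f x))).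
Proof.
move=> fc oV V1 x Ax.
have hf : f @ within A (nbhs x) --> f x by move/subspace_continuousP: fc; apply.
have hm : (fun t => mul (f t) (inv (f x))) @ within A (nbhs x) --> mul (f x) (inv (f x)).
  by apply: (mulc_cvg HG); exact: hf.
have [_ _ hinv _ _] := HG.
move: hm; rewrite (hinv (f x)).2 => /(_ V (open_nbhs_nbhs (conj oV V1))).
rewrite /within /= => /nbhs_ballP [e e0 he].
exists e => // y Ay xy.
exact: (he y xy Ay).
Qed.

Lemma sm_step (R : realType) (G : topologicalType) (mul : G -> G -> G) (inv : G -> G) (one : G)
  (HG : topological_group mul inv one) (f : R -> G) (Hf : strongly_measurable f)
  (n : nat) (n0 : (0 < n)%N) (g : n.-tuple G) :
  strongly_measurable (fun x => mul (f x) (inv (hn one g x))).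
Proof.
move=> e e0.
have e20 : 0 < e / 2 by rewrite divr_gt0.
have [A [cA A01 mA fA]] := Hf _ e20.
pose eta := e / 4.
have eta0 : 0 < eta by rewrite divr_gt0.
have nR0 : 0 < n%:R :> R by rewrite ltr0n.
pose S := \bigcup_(k in `I_n) ball (k%:R / n%:R : R) (eta / n%:R).
have oS : open S by apply: bigcup_open => k _; exact: ball_open.
exists (A `&` ~` S); split.
- by apply: closedI => //; exact: open_closedC.
- by move=> x [/A01].
- pose F k := if k is k'.+1 then ball (k'%:R / n%:R : R) (eta / n%:R) else `[0%R, 1%R] `\` A.
  have mF : forall k, `I_n.+1 k -> measurable (F k).
    case=> [|k] _ /=; last by apply: open_measurable; exact: ball_open.
    by apply: measurableD => //; exact: closed_measurable.
  have mX : measurable (`[0%R, 1%R] `\` (A `&` ~` S)).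
    apply: measurableD => //; apply: closed_measurable.
    by apply: closedI => //; exact: open_closedC.
  have sub : `[0%R, 1%R] `\` (A `&` ~` S) `<=` \big[setU/set0]_(k < n.+1) F k.
    rewrite -bigcup_mkord => x [x01 nAS].
    have [Ax|nAx] := pselect (A x); last by exists 0%N => //=.
    have [[k kn bk]|nSx] := pselect (S x); last by exfalso; apply: nAS.
    by exists k.+1.
  apply: le_trans (content_subadditive lebesgue_measure mF mX sub) _.
  rewrite big_ord_recl /=.
  under eq_bigr do rewrite /= lebesgue_measure_ball ?divr_ge0 ?ltW //.
  rewrite sumEFin sumr_const card_ord.
  have -> : e = e / 2 + ((eta / n%:R) *+ 2) *+ n.
    rewrite -mulrnA mulnC mulrnA -[(eta / _) *+ n]mulr_natr mulfVK; last by rewrite gt_eqF.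
    rewrite /eta; lra.
  by rewrite EFinD; apply: leeD.
- apply/subspace_continuousP => x [Ax nSx].
  have hfA : f @ within A (nbhs x) --> f x by move/subspace_continuousP: fA; apply.
  have hfB : f @ within (A `&` ~` S) (nbhs x) --> f x.
    move=> W /hfA; apply: (within_subset _ _) => //; by move=> y [].
  have hm : (fun y => mul (f y) (inv (hn one g x))) @ within (A `&` ~` S) (nbhs x)
      --> mul (f x) (inv (hn one g x)).
    by apply: (mulc_cvg HG); exact: hfB.
  apply: cvg_trans hm; apply: near_eq_cvg.
  rewrite /within /=; apply/nbhs_ballP; exists (eta / n%:R); first by apply: divr_gt0.

  move=> y bxy [Ay nSy] /=.
  have x01 : 0 <= x <= 1 by have := A01 _ Ax; rewrite /= in_itv.
  have y01 : 0 <= y <= 1 by have := A01 _ Ay; rewrite /= in_itv.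
  rewrite /hn; congr (mul _ (inv (nth _ _ _))); apply: (idx_const (eta := eta)) => //.
  + move=> k /andP[k0 kn]; rewrite leNgt; apply/negP => hk; apply: nSx.
    exists k => //=; rewrite /ball /= ltr_pdivlMr // distrC.
    have e1 : n%:R * x - k%:R = (x - k%:R / n%:R) * n%:R.
      by field; rewrite gt_eqF.
    suff -> : `|x - k%:R / n%:R| * n%:R = `|n%:R * x - k%:R| by [].
    by rewrite e1 normrM (ger0_norm (ler0n _ n)).
  + move: bxy; rewrite /ball /= ltr_pdivlMr // -mulrBr normrM ger0_norm ?ler0n // mulrC distrC.
    by [].
Qed.

Lemma min_list (R : realType) (r : R -> R) (s : seq R) : (forall x, 0 < r x) ->
  exists d : R, 0 < d /\ forall j, j \in s -> d <= r j.
Proof.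
move=> rp; elim: s => [|a s [d [d0 hd]]]; first by exists 1.
exists (Num.min d (r a)); split; first by rewrite lt_min d0 rp.
move=> j; rewrite inE => /orP[/eqP->|js]; first by rewrite ge_min lexx orbT.
by rewrite ge_min hd.
Qed.

Lemma finite_cover_delta (R : realType) (A : set R) (r : R -> R) :
  compact A -> (forall x, 0 < r x) ->
  exists (D : {fset R}) (d : R), [/\ 0 < d, (forall j, j \in D -> A j),
    (forall y, A y -> exists2 j, j \in D & `|j - y| < r j)
    & (forall j, j \in D -> d <= r j)].
Proof.
move=> cA rp.
rewrite compact_cover in cA.
move: cA => /(_ R A (fun x => ball x (r x))) [].
- by move=> i _; exact: ball_open.
- move=> y Ay; exists y => //; exact: ballxx.
move=> D DA cov.
have [d [d0 hd]] := min_list (enum_fset D) rp.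
exists D, d; split => //.
by move=> j jD; apply: set_mem; exact: DA.
Qed.


Unset Implicit Arguments. Set Strict Implicit.

Theorem lemma4p1 (R : realType) (G : topologicalType)
    (mul : G -> G -> G) (inv : G -> G) (one : G)
    (HG : topological_group mul inv one)
    (f : R -> G) (Hf : strongly_measurable f)
    (U : set (R -> G)) (HU : L0_nbhs1 one U) :
  exists (E : set G) (m : nat), finite_set E /\
    forall n : nat, (m <= n)%N -> (0 < n)%N ->
      exists (u : R -> G) (g : n.-tuple G),
        [/\ U u, (forall i : 'I_n, E (tnth g i))
          & ae_eq01 f (fun x => mul (u x) (hn one g x))].
Proof.
have [_ [V [eps [oV V1 eps0 NU]]]] := HU.
have e20 : 0 < eps / 2 by apply: divr_gt0.
have [A [cA A01 mA fA]] := Hf _ e20.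
have cpA : compact A := subclosed_compact cA (@segment_compact R 0 1) A01.
have [r rP] : exists r : R -> R, forall x, 0 < r x /\
    (A x -> forall y, A y -> `|x - y| < 2 * r x -> V (mul (f y) (inv (f x)))).
  have H : forall x, exists rx : R, 0 < rx /\
    (A x -> forall y, A y -> `|x - y| < 2 * rx -> V (mul (f y) (inv (f x)))).
    move=> x; case: (pselect (A x)) => Ax.
      have [r0 r00 hr] := local_V HG fA oV V1 Ax.
      exists (r0 / 2); split; first by apply: divr_gt0.
      move=> _ y Ay xy; apply: hr => //; lra.
    by exists 1; split => // /Ax.
  by have [r hr] := choice H; exists r.
have [D [d [d0 DA cov dr]]] := finite_cover_delta cpA (fun x => (rP x).1).
pose E := (f @` [set` D]) `|` [set one].
exists E, (Num.truncn d^-1).+1; split.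
  by rewrite /E finite_setU; split; [apply: finite_image; exact: finite_fset|exact: finite_set1].
move=> n mn n0.
have nR0 : 0 < n%:R :> R by rewrite ltr0n.
have nd : n%:R^-1 < d.
  have h1 : d^-1 < n%:R.
    have di0 : 0 < d^-1 by rewrite invr_gt0.
    have := truncn_itv (ltW di0) => /andP[_ h].
    apply: lt_le_trans h _; rewrite ler_nat; exact: mn.
  rewrite -(ltr_pM2r d0) mulVf ?gt_eqF // in h1.
  by rewrite -(ltr_pM2l nR0) mulfV ?gt_eqF.
pose idx (x : R) := minn (Num.truncn (n%:R * x)) n.-1.
have gk : forall k : nat, exists e, E e /\
    (forall x, A x -> idx x = k -> V (mul (f x) (inv e))).
  move=> k; case: (pselect (exists y, A y /\ idx y = k)) => [[y [Ay hy]]|none].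
  - have [j jD hj] := cov y Ay.
    exists (f j); split; first by left; exists j.
    move=> x Ax hx; apply: (rP j).2 => //; first exact: DA.
    have y01 : 0 <= y <= 1 by have := A01 _ Ay; rewrite /= in_itv.
    have x01 : 0 <= x <= 1 by have := A01 _ Ax; rewrite /= in_itv.
    have := idx_close n0 y01 x01; rewrite /idx in hx hy; rewrite hx hy => /(_ erefl).
    rewrite -mulrBr normrM ger0_norm ?ler0n // => hyx.
    have hyx' : `|y - x| <= n%:R^-1 by rewrite -(ler_pM2l nR0) mulfV ?gt_eqF.
    have := dr j jD; have := ler_distD y j x.
    move: hj hyx' nd; lra.
  - exists one; split; first by right.
    by move=> x Ax hx; exfalso; apply: none; exists x.
have [gf gfP] := choice gk.
pose g := [tuple gf i | i < n].
have hng : forall x, hn one g x = gf (idx x).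
  move=> x; have kn : (idx x < n)%N by rewrite /idx; lia.
  by rewrite /hn -[minn _ _]/(nat_of_ord (Ordinal kn)) nth_mktuple.
exists (fun x => mul (f x) (inv (hn one g x))), g; split.
- apply: NU; split; first exact: (sm_step HG Hf n0).
  apply: (le_lt_trans (lm_le (B := `[0%R, 1%R] `\` A) _)).
    move=> x [x01 nV]; split => // Ax; apply: nV; rewrite /= hng.
    exact: (gfP _).2 x Ax erefl.
  apply: (le_lt_trans mA); rewrite lte_fin; lra.
- by move=> i; rewrite tnth_mktuple; exact: (gfP i).1.
- rewrite /ae_eq01; have n0s := negligible_set0 (@lebesgue_measure R).
  eapply negligibleS; last exact: n0s.
  move=> x [hx _]; apply: hx.
  have [ass id1 hinv _ _] := HG.
  by rewrite -ass (hinv _).1 (id1 _).2.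
Qed.
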